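(* Let $M\in\mathbb{N}$ and let $c$ and $c_j$, $j\geq 1$, be proper series in $\ell_{\infty,M}(X^\ast,\mathbb{K})$ with $\|c-c_j\|_{\ell_\infty,M}\to 0$ as $j\to\infty$. Then for $N\in\mathbb{N}$ sufficiently large, $$\sum_{n=1}^\infty \|c^{\sqcup\!\sqcup\, n}-c_j^{\sqcup\!\sqcup\, n}\|_{\ell_\infty,N}\to 0\quad\text{as } j\to\infty.$$
   Context: $\mathbb{K}\in\{\mathbb{R},\mathbb{C}\}$. $X=\{x_0,\ldots,x_m\}$ is a finite alphabet, $X^\ast$ its set of words (including the empty word $\emptyset$), $|\eta|$ the length of $\eta$. A series $c\colon X^\ast\to\mathbb{K}$ is proper if $(c,\emptyset)=0$. For $M>0$, $\|c\|_{\ell_\infty,M}=\sup_\eta|(c,\eta)|/(M^{|\eta|}|\eta|!)$ and $\ell_{\infty,M}(X^\ast,\mathbb{K})$ is the Banach space of series with finite such norm. The shuffle product is the bilinear product determined on words by $(x_i\eta)\sqcup\!\sqcup(x_j\xi)=x_i(\eta\sqcup\!\sqcup(x_j\xi))+x_j((x_i\eta)\sqcup\!\sqcup\xi)$, $\eta\sqcup\!\sqcup\emptyset=\emptyset\sqcup\!\sqcup\eta=\eta$, extended bilinearly to series; $c^{\sqcup\!\sqcup n}$ denotes the $n$-fold shuffle power. *)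

(* Defs.v *)
From HB Require Import structures.
From mathcomp Require Import all_boot all_order all_algebra.
From mathcomp Require Import all_classical all_reals all_analysis.
From mathcomp Require Import complex.
Set Implicit Arguments.
Unset Strict Implicit.
Unset Printing Implicit Defensive.
Import Order.TTheory GRing.Theory Num.Theory.
Local Open Scope ring_scope.

(* Alphabet X = {x_0, ..., x_m} is 'I_m.+1; words X^* are sequences of letters. *)
Definition word (m : nat) := seq 'I_m.+1.

(* Shuffle of two words, as a list of words with multiplicities:
   (x_i u) sh (x_j v) = x_i (u sh x_j v) + x_j (x_i u sh v),
   u sh [] = [] sh u = u. *)
Fixpoint shw {m : nat} (u v : word m) {struct u} : seq (word m) :=
  match u with
  | [::] => [:: v]
  | a :: u' =>
      (fix shv (v : word m) : seq (word m) :=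
         match v with
         | [::] => [:: u]
         | b :: v' => map (cons a) (shw u' v) ++ map (cons b) (shv v')
         end) v
  end.

Definition series (K : Type) (m : nat) := word m -> K.

Section Series.
Variables (K : comNzRingType) (m : nat).

Definition proper (c : series K m) : Prop := c [::] = 0.

(* Bilinear extension of the word shuffle to series:
   (c sh d, w) = sum_{u, v} (c,u) (d,v) (u sh v, w), where only |u|+|v| = |w|
   contributes. *)
Definition shuffle (c d : series K m) : series K m := fun w =>
  \sum_(k < (size w).+1) \sum_(u : k.-tuple 'I_m.+1)
     \sum_(v : (size w - k).-tuple 'I_m.+1)
        (c u * d v *+ count_mem w (shw (u : word m) (v : word m))).

Definition unit_series : series K m := fun w => (w == [::])%:R.

Fixpoint shpow (c : series K m) (n : nat) : series K m :=
  match n with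
  | 0 => unit_series
  | n'.+1 => shuffle c (shpow c n')
  end.

Definition sub_series (c d : series K m) : series K m := fun w => c w - d w.
End Series.

Section Norm.
Variables (R : realType) (K : comNzRingType) (absK : K -> R) (m : nat).
Local Open Scope classical_set_scope.
Local Open Scope ereal_scope.

Definition linf_norm (M : nat) (c : series K m) : \bar R :=
  ereal_sup [set ((absK (c w) / ((M ^ size w)%:R * (size w)`!%:R))%R)%:E
            | w in [set: word m]].

Definition in_linf (M : nat) (c : series K m) : Prop := linf_norm M c < +oo.

Definition lemma3p5_stmt : Prop :=
  forall (M : nat) (c : series K m) (cj : nat -> series K m),
    (0 < M)%N ->
    proper c -> in_linf M c ->
    (forall j, (0 < j)%N -> proper (cj j) /\ in_linf M (cj j)) ->
    (fun j => linf_norm M (sub_series c (cj j))) @ \oo --> 0 ->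
    exists N0 : nat, forall N : nat, (N0 <= N)%N ->
      (fun j => \sum_(1 <= n <oo)
                  linf_norm N (sub_series (shpow c n) (shpow (cj j) n))) @ \oo
      --> 0.
End Norm.

(* Main.v *)
Require Import Defs.
From HB Require Import structures.
From mathcomp Require Import all_boot all_order all_algebra.
From mathcomp Require Import all_classical all_reals all_analysis.
From mathcomp Require Import complex.
From mathcomp Require Import ring lra.
Set Implicit Arguments. Unset Strict Implicit. Unset Printing Implicit Defensive.
Import Order.TTheory GRing.Theory Num.Theory.

Lemma big_tuple_cons (T : finType) k (F : k.+1.-tuple T -> nat) :
  \sum_(t : k.+1.-tuple T) F t = \sum_(x : T) \sum_(t : k.-tuple T) F [tuple of x :: t].
Proof.
rewrite pair_big /=.
rewrite (reindex (fun p : T * k.-tuple T => [tuple of p.1 :: p.2])) /=; last first.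
  exists (fun t : k.+1.-tuple T => (thead t, [tuple of behead t])).
    by move=> [x t] _ /=; congr pair; apply: val_inj.
  by move=> t _; apply: val_inj => /=; case: t => -[|x s] //=.
by [].
Qed.

Section Comb.
Variable m : nat.

Lemma shw_nil_r (u : word m) : shw u [::] = [:: u].
Proof. by case: u. Qed.

Lemma shw_cons (x y : 'I_m.+1) (u v : word m) :
  shw (x :: u) (y :: v) = map (cons x) (shw u (y :: v)) ++ map (cons y) (shw (x :: u) v).
Proof. by []. Qed.

Lemma count_map_cons (x a : 'I_m.+1) (w : word m) (s : seq (word m)) :
  count_mem (a :: w) (map (cons x) s) = ((x == a) * count_mem w s)%N.
Proof.
elim: s => [|t s IH] /=; first by rewrite muln0.
rewrite IH mulnDr; congr addn.
rewrite eqseq_cons; by case: (x == a); rewrite ?mul1n ?mul0n.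
Qed.

Lemma count_nil_cons (x : 'I_m.+1) (s : seq (word m)) :
  count_mem [::] (map (cons x) s) = 0%N.
Proof. by elim: s. Qed.

Lemma sum_tuple_eq (w : word m) l :
  \sum_(v : l.-tuple 'I_m.+1) (w == v :> word m) = (size w == l).
Proof.
case: (eqVneq (size w) l) => [sw|swl].
  rewrite (bigD1 (Tuple (introT eqP sw))) //= eqxx big1 //.
  move=> t tT; apply/eqP; rewrite eqb0; apply: contra tT => /eqP wt.
  by apply/eqP/val_inj; rewrite /= wt.
rewrite big1 // => t _; apply/eqP; rewrite eqb0; apply/negP => /eqP wt.
by move: swl; rewrite wt size_tuple eqxx.
Qed.

Lemma big_tuple0 (F : 0.-tuple 'I_m.+1 -> nat) :
  \sum_(t : 0.-tuple 'I_m.+1) F t = F [tuple].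
Proof. rewrite (bigD1 [tuple]) //= big1 ?addn0 // => t /negP []; apply/eqP; exact: tuple0. Qed.

Lemma sum_eqa (a : 'I_m.+1) (G : nat) : \sum_(y : 'I_m.+1) ((y == a) * G)%N = G.
Proof.
rewrite (bigD1 a) //= eqxx mul1n big1 ?addn0 // => y /negbTE ->; by rewrite mul0n.
Qed.

Lemma split4 k l (f g : 'I_m.+1 -> k.-tuple 'I_m.+1 -> 'I_m.+1 -> l.-tuple 'I_m.+1 -> nat) :
  \sum_x \sum_u \sum_y \sum_v (f x u y v + g x u y v)%N =
  (\sum_x \sum_u \sum_y \sum_v f x u y v + \sum_x \sum_u \sum_y \sum_v g x u y v)%N.
Proof.
rewrite -big_split; apply: eq_bigr => x _; rewrite -big_split; apply: eq_bigr => u _.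
rewrite -big_split; apply: eq_bigr => y _; rewrite -big_split //.
Qed.

Lemma shw_count0l (w : word m) l :
  \sum_(u : 0.-tuple 'I_m.+1) \sum_(v : l.-tuple 'I_m.+1)
      count_mem w (shw (u : word m) (v : word m))
  = ((size w == 0 + l) * 'C(0 + l, 0))%N.
Proof.
rewrite big_tuple0 add0n bin0 muln1 -sum_tuple_eq; apply: eq_bigr => v _.
by rewrite /= addn0 eq_sym.
Qed.

Lemma shw_count0r (w : word m) k :
  \sum_(u : k.-tuple 'I_m.+1) \sum_(v : 0.-tuple 'I_m.+1)
      count_mem w (shw (u : word m) (v : word m))
  = ((size w == k + 0) * 'C(k + 0, k))%N.
Proof.
rewrite addn0 binn muln1 -sum_tuple_eq; apply: eq_bigr => u _.
by rewrite big_tuple0 /= shw_nil_r /= addn0 eq_sym.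
Qed.

Lemma shw_count (w : word m) k l :
  \sum_(u : k.-tuple 'I_m.+1) \sum_(v : l.-tuple 'I_m.+1)
      count_mem w (shw (u : word m) (v : word m))
  = ((size w == k + l) * 'C(k + l, k))%N.
Proof.
elim: w k l => [|a w IH] k l.
  case: k => [|k]; first exact: shw_count0l.
  case: l => [|l]; first exact: shw_count0r.
  rewrite big_tuple_cons big1 // => x _; rewrite big1 // => u _.
  rewrite big_tuple_cons big1 // => y _; rewrite big1 // => v _.
  by rewrite (shw_cons x y u v) count_cat !count_nil_cons.
case: k => [|k]; first exact: shw_count0l.
case: l => [|l]; first exact: shw_count0r.
have E x u y v : count_mem (a :: w) (shw (x :: u) (y :: v)) =
   ((x == a) * count_mem w (shw u (y :: v)) + (y == a) * count_mem w (shw (x :: u) v))%N.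
  by rewrite shw_cons count_cat !count_map_cons.
transitivity (\sum_(x : 'I_m.+1) \sum_(u : k.-tuple 'I_m.+1) \sum_(y : 'I_m.+1)
   \sum_(v : l.-tuple 'I_m.+1)
   ((x == a) * count_mem w (shw (u : word m) (y :: (v : word m)))
    + (y == a) * count_mem w (shw (x :: (u : word m)) (v : word m)))%N).
  rewrite big_tuple_cons; apply: eq_bigr => x _; apply: eq_bigr => u _.
  rewrite big_tuple_cons; apply: eq_bigr => y _; apply: eq_bigr => v _; exact: E.
rewrite split4.
have -> : (\sum_(x : 'I_m.+1) \sum_(u : k.-tuple 'I_m.+1) \sum_(y : 'I_m.+1)
   \sum_(v : l.-tuple 'I_m.+1)
   ((x == a) * count_mem w (shw (u : word m) (y :: (v : word m)))))%N
   = ((size w == k + l.+1) * 'C(k + l.+1, k))%N.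
  rewrite -IH -[RHS](sum_eqa a); apply: eq_bigr => x _.
  rewrite big_distrr; apply: eq_bigr => u _.
  rewrite big_tuple_cons big_distrr; apply: eq_bigr => y _.
  by rewrite big_distrr.
have -> : (\sum_(x : 'I_m.+1) \sum_(u : k.-tuple 'I_m.+1) \sum_(y : 'I_m.+1)
   \sum_(v : l.-tuple 'I_m.+1)
   ((y == a) * count_mem w (shw (x :: (u : word m)) (v : word m))))%N
   = ((size w == k.+1 + l) * 'C(k.+1 + l, k.+1))%N.
  rewrite -IH big_tuple_cons; apply: eq_bigr => x _; apply: eq_bigr => u _.
  rewrite -[RHS](sum_eqa a); apply: eq_bigr => y _.
  by rewrite big_distrr.
rewrite addSnnS -mulnDr; congr muln.
by rewrite addSn binS addnC.
Qed.
End Comb.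

Local Open Scope ring_scope.

Section Gen.
Variables (R : realType) (K : comNzRingType) (absK : K -> R) (m : nat).
Hypothesis abs0 : absK 0 = 0.
Hypothesis abs_ge0 : forall x, 0 <= absK x.
Hypothesis absD : forall x y, absK (x + y) <= absK x + absK y.
Hypothesis absM : forall x y, absK (x * y) = absK x * absK y.
Hypothesis absN : forall x, absK (- x) = absK x.
Hypothesis abs1 : absK 1 <= 1.

Lemma abs_sum (I : Type) (r : seq I) (P : pred I) (F : I -> K) :
  absK (\sum_(i <- r | P i) F i) <= \sum_(i <- r | P i) absK (F i).
Proof.
apply: (big_ind2 (fun x y => absK x <= y)); first by rewrite abs0.
  by move=> x1 y1 x2 y2 h1 h2; apply: le_trans (absD _ _) (lerD h1 h2).
by [].
Qed.

Lemma abs_mulrn x n : absK (x *+ n) <= absK x *+ n.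
Proof.
elim: n => [|n IH]; first by rewrite !mulr0n abs0.
by rewrite !mulrS; apply: le_trans (absD _ _) (lerD (lexx _) IH).
Qed.

Definition domb (c : Defs.series K m) (b : nat -> R) :=
  forall w : word m, absK (c w) <= b (size w) * (size w)`!%:R.

Definition conv (b g : nat -> R) (n : nat) := \sum_(i < n.+1) b i * g (n - i)%N.

Lemma dom_shuffle c d b g : domb c b -> domb d g -> domb (shuffle c d) (conv b g).
Proof.
move=> hc hd w; set n := size w.
rewrite /shuffle /conv mulr_suml.
apply: le_trans (abs_sum _ _ _) _; apply: ler_sum => k _.
apply: le_trans (abs_sum _ _ _) _.
have kn : (k <= n)%N by rewrite -ltnS.
apply: (@le_trans _ _ (\sum_(u : k.-tuple 'I_m.+1) \sum_(v : (n - k).-tuple 'I_m.+1)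
   ((b k * k`!%:R) * (g (n - k)%N * (n - k)`!%:R)) *+ count_mem w (shw (u : word m) (v : word m)))).
  apply: ler_sum => u _; apply: le_trans (abs_sum _ _ _) _; apply: ler_sum => v _.
  apply: le_trans (abs_mulrn _ _) _; apply: ler_wMn2r.
  rewrite absM; apply: ler_pM => //.
    by have := hc u; rewrite size_tuple.
  by have := hd v; rewrite size_tuple.
under eq_bigr => u _ do rewrite sumrMnr.
rewrite sumrMnr shw_count subnKC // eqxx mul1n.
rewrite -(bin_fact kn) natrM natrM -mulr_natr.
by rewrite le_eqVlt; apply/orP; left; apply/eqP; ring.
Qed.

Lemma domb_le (c : Defs.series K m) (b b' : nat -> R) : domb c b -> (forall k, b k <= b' k) -> domb c b'.
Proof.
move=> h hb w; apply: le_trans (h w) _; apply: ler_wpM2r => //; exact: hb.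
Qed.

Lemma domb_add (c d : Defs.series K m) (b g : nat -> R) : domb c b -> domb d g ->
  domb (fun w => c w + d w) (fun k => b k + g k).
Proof.
move=> hc hd w; rewrite mulrDl; apply: le_trans (absD _ _) _; exact: lerD.
Qed.

Lemma domb_ext (c c' : Defs.series K m) (b : nat -> R) : (forall w, c w = c' w) -> domb c' b -> domb c b.
Proof. by move=> e h w; rewrite e. Qed.

Lemma shuffle_subl (c d e : Defs.series K m) w :
  shuffle (Defs.sub_series c d) e w = shuffle c e w - shuffle d e w.
Proof.
rewrite /shuffle -sumrB; apply: eq_bigr => k _; rewrite -sumrB; apply: eq_bigr => u _.
rewrite -sumrB; apply: eq_bigr => v _; by rewrite /Defs.sub_series mulrBl mulrnBl.
Qed.

Lemma shuffle_subr (c d e : Defs.series K m) w :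
  shuffle c (Defs.sub_series d e) w = shuffle c d w - shuffle c e w.
Proof.
rewrite /shuffle -sumrB; apply: eq_bigr => k _; rewrite -sumrB; apply: eq_bigr => u _.
rewrite -sumrB; apply: eq_bigr => v _; by rewrite /Defs.sub_series mulrBr mulrnBl.
Qed.

Lemma shpow_sub_rec (c d : Defs.series K m) n w :
  Defs.sub_series (shpow c n.+1) (shpow d n.+1) w =
  shuffle (Defs.sub_series c d) (shpow c n) w + shuffle d (Defs.sub_series (shpow c n) (shpow d n)) w.
Proof.
by rewrite shuffle_subl shuffle_subr /Defs.sub_series /= addrA subrK.
Qed.

Definition gs (A : R) (k : nat) : R := if k is 0 then 0 else A ^+ k.

Fixpoint Hs (A : R) (n : nat) : nat -> R :=
  match n with
  | 0 => fun k => (k == 0)%:R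
  | n'.+1 => conv (gs A) (Hs A n')
  end.

Lemma conv_scalel a b g n : conv (fun i => a * b i) g n = a * conv b g n.
Proof. by rewrite /conv mulr_sumr; apply: eq_bigr => i _; rewrite mulrA. Qed.

Lemma conv_scaler a b g n : conv b (fun i => a * g i) n = a * conv b g n.
Proof. by rewrite /conv mulr_sumr; apply: eq_bigr => i _; rewrite mulrCA. Qed.

Lemma gs_ge0 A k : 0 <= A -> 0 <= gs A k.
Proof. by case: k => //= k A0; rewrite exprn_ge0. Qed.

Lemma Hs_ge0 A n k : 0 <= A -> 0 <= Hs A n k.
Proof.
move=> A0; elim: n k => [|n IH] k /=; first by rewrite ler0n.
by apply: sumr_ge0 => i _; rewrite mulr_ge0 ?gs_ge0.
Qed.

Lemma domb_unit : domb (@unit_series K m) (Hs 0 0).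
Proof.
move=> w; rewrite /unit_series /=; case: w => [|a w] /=.
  by rewrite mulr1.
by rewrite abs0 mul0r.
Qed.

Lemma domb_shpow A (c : Defs.series K m) n : domb c (gs A) -> domb (shpow c n) (Hs A n).
Proof.
move=> hc; elim: n => [|n IH] /=; first exact: domb_unit.
exact: dom_shuffle.
Qed.

Lemma domb_diff A (c d : Defs.series K m) (eps : R) n :
  domb c (gs A) -> domb d (gs A) -> domb (Defs.sub_series c d) (fun k => eps * gs A k) ->
  domb (Defs.sub_series (shpow c n) (shpow d n)) (fun k => eps * n%:R * Hs A n k).
Proof.
move=> hc hd hcd; elim: n => [|n IH].
  by move=> w; rewrite /Defs.sub_series subrr abs0 mulr0 mul0r mul0r.
apply: (domb_ext (c' := fun w => shuffle (Defs.sub_series c d) (shpow c n) w +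
   shuffle d (Defs.sub_series (shpow c n) (shpow d n)) w) (shpow_sub_rec c d n)).
apply: domb_le (domb_add (dom_shuffle hcd (domb_shpow n hc)) (dom_shuffle hd IH)) _.
move=> k; rewrite conv_scalel conv_scaler /=.
by rewrite le_eqVlt; apply/orP; left; apply/eqP; rewrite mulrS; ring.
Qed.

End Gen.

Section Bounds.
Variable R : realType.

Lemma geom_sum (r : R) k : (\sum_(i < k) r ^+ i) * (1 - r) = 1 - r ^+ k.
Proof.
elim: k => [|k IH]; first by rewrite big_ord0 mul0r expr0 subrr.
by rewrite big_ord_recr /= mulrDl IH exprS; ring.
Qed.

Lemma geom_le (r : R) k : 0 <= r < 1 -> \sum_(i < k) r ^+ i <= (1 - r)^-1.
Proof.
move=> /andP[r0 r1]; have h : 0 < 1 - r by rewrite subr_gt0.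
rewrite -(ler_pM2r h) mulVf ?gt_eqF // geom_sum lerBlDr lerDl.
exact: exprn_ge0.
Qed.

Lemma Hs_bound (A : R) n k : 0 <= A -> Hs A n k <= (5 * A) ^+ k / 4%:R ^+ n.
Proof.
move=> A0; elim: n k => [|n IH] k /=.
  rewrite expr0 divr1; case: k => [|k] /=; first by rewrite expr0.
  by rewrite exprn_ge0 // mulr_ge0.
rewrite /conv big_ord_recl /= mul0r add0r.
set C := (5 * A) ^+ k / 4%:R ^+ n.
apply: (@le_trans _ _ (\sum_(i < k) C * (5^-1 * 5^-1 ^+ i))).
  apply: ler_sum => i _.
  have ik : (i < k)%N := ltn_ord i.
  have hb := IH (k - (bump 0 i))%N.
  apply: le_trans (ler_wpM2l (exprn_ge0 _ A0) hb) _.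
  rewrite /C /bump /= add1n.
  move: (subnK ik); set j := (k - i.+1)%N => kj.
  have e : (5 * A) ^+ k = (5 * A) ^+ j * (5 * A) ^+ i.+1 by rewrite -exprD kj.
  rewrite e.
  rewrite -exprS !exprMn exprVn le_eqVlt; apply/orP; left; apply/eqP.
  have ha : (5 : R) ^+ i.+1 != 0 by rewrite expf_neq0 // pnatr_eq0.
  have hb4 : (4 : R) ^+ n != 0 by rewrite expf_neq0 // pnatr_eq0.
  move: ha hb4; set a := (5 : R) ^+ i.+1; set b := (4 : R) ^+ n; move=> ha hb4.
  by field; rewrite ha hb4.
have C0 : 0 <= C by rewrite /C divr_ge0 // exprn_ge0 // mulr_ge0.
rewrite -mulr_sumr -mulr_sumr.
have r01 : 0 <= (5 : R)^-1 < 1 by rewrite invr_ge0 ler0n /= invf_lt1 // ltr1n.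
apply: le_trans (ler_wpM2l C0 (ler_wpM2l _ (geom_le _ r01))) _.
  by rewrite invr_ge0 ler0n.
rewrite /C exprS le_eqVlt; apply/orP; left; apply/eqP.
have hb4 : (4 : R) ^+ n != 0 by rewrite expf_neq0 // pnatr_eq0.
move: hb4; set b := (4 : R) ^+ n; move=> hb4.
by field; rewrite hb4.
Qed.

End Bounds.

Section Main.
Variables (R : realType) (K : comNzRingType) (absK : K -> R) (m : nat).
Hypothesis abs0 : absK 0 = 0.
Hypothesis abs_ge0 : forall x, 0 <= absK x.
Hypothesis absD : forall x y, absK (x + y) <= absK x + absK y.
Hypothesis absM : forall x y, absK (x * y) = absK x * absK y.
Hypothesis absN : forall x, absK (- x) = absK x.
Hypothesis abs1 : absK 1 <= 1.

Definition den (N : nat) (w : word m) : R := (N ^ size w)%:R * (size w)`!%:R.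

Lemma den_gt0 N w : (0 < N)%N -> 0 < den N w.
Proof. by move=> N0; rewrite /den mulr_gt0 // ltr0n ?expn_gt0 ?N0 ?fact_gt0. Qed.

Lemma linf_ge0 N (c : Defs.series K m) : (0 <= linf_norm absK N c)%E.
Proof.
apply: le_ereal_sup_tmp; exists ((absK (c [::]) / ((N ^ size ([::] : word m))%:R * (size ([::] : word m))`!%:R))%:E).
  by exists [::].
by rewrite lee_fin divr_ge0.
Qed.

Lemma linf_pt N (c : Defs.series K m) x w : (0 < N)%N ->
  (linf_norm absK N c <= x%:E)%E -> absK (c w) <= x * den N w.
Proof.
move=> N0 h; rewrite -ler_pdivrMr ?den_gt0 //; rewrite -lee_fin.
apply: le_trans h; apply: ereal_sup_ubound; by exists w.
Qed.

Lemma linf_ub N (c : Defs.series K m) x : (0 < N)%N ->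
  (forall w, absK (c w) <= x * den N w) -> (linf_norm absK N c <= x%:E)%E.
Proof.
move=> N0 h; apply: ge_ereal_sup => _ [w _ <-].
by rewrite lee_fin ler_pdivrMr ?den_gt0 //; exact: h.
Qed.

Lemma half_sum (n0 : nat) : \sum_(1 <= n < n0) ((2 : R)^-1) ^+ n <= 1.
Proof.
case: n0 => [|n0]; first by rewrite big_geq.
have r01 : 0 <= (2 : R)^-1 < 1 by rewrite invr_ge0 ler0n /= invf_lt1 // ltr1n.
have := geom_le n0.+1 r01.
rewrite -(big_mkord xpredT (fun i => ((2 : R)^-1) ^+ i)) big_ltn // expr0.
have -> : (1 - (2 : R)^-1)^-1 = 1 + 1.
  have h : (1 - (2 : R)^-1) = 2^-1 by field.
  by rewrite h invrK.
by rewrite lerD2l.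
Qed.

Lemma key (M N : nat) (c d : Defs.series K m) (a eps : R) :
  (0 < M)%N -> c [::] = 0 -> d [::] = 0 -> 0 <= a -> 0 <= eps <= 1 ->
  (forall w, absK (c w) <= a * den M w) ->
  (forall w, absK (c w - d w) <= eps * den M w) ->
  5 * ((a + 1) * M%:R) <= N%:R ->
  (\sum_(1 <= n <oo) linf_norm absK N (Defs.sub_series (shpow c n) (shpow d n)) <= eps%:E)%E.
Proof.
move=> M0 c0 d0 a0 /andP[e0 e1] hc hcd hN.
set L := a + 1; set A := L * M%:R.
have L1 : 1 <= L by rewrite /L lerDr.
have L0 : 0 <= L by apply: le_trans ler01 L1.
have M1 : 1 <= (M%:R : R) by rewrite ler1n.
have A0 : 0 <= A by rewrite mulr_ge0 // (le_trans ler01 M1).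
have N0 : (0 < N)%N.
  rewrite -(ltr0n R); apply: lt_le_trans hN; rewrite mulr_gt0 // mulr_gt0 //.
    by apply: lt_le_trans ltr01 L1.
  by apply: lt_le_trans ltr01 M1.
have gen (f : Defs.series K m) (x y : R) : 0 <= y -> x <= y * L -> f [::] = 0 ->
    (forall w, absK (f w) <= x * den M w) -> domb absK f (fun k => y * gs A k).
  move=> y0 xy f0 hf w; case e: (size w) => [|k].
    by rewrite (size0nil e) f0 abs0 /= mulr0 mul0r.
  apply: le_trans (hf w) _; rewrite /den e /= natrX exprMn -!mulrA [X in _ <= X]mulrA.
  apply: ler_wpM2r; first by rewrite mulr_ge0 // exprn_ge0 // (le_trans ler01 M1).
  apply: le_trans xy _; apply: ler_wpM2l => //; exact: ler_eXnr.
have hc' : domb absK c (gs A).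
  apply: domb_le (gen c a 1 ler01 _ c0 hc) _ => //.
    by rewrite mul1r /L lerDl.
  by move=> k; rewrite mul1r.
have hd' : domb absK d (gs A).
  apply: domb_le (gen d (a + eps) 1 ler01 _ d0 _) _ => //.
  - by rewrite mul1r /L lerD2l.
  - move=> w; have -> : d w = c w + - (c w - d w) by ring.
    apply: le_trans (absD _ _) _; rewrite absN mulrDl; exact: lerD.
  - by move=> k; rewrite mul1r.
have hcd' : domb absK (Defs.sub_series c d) (fun k => eps * gs A k).
  apply: (gen _ eps eps e0 _ _ hcd).
    by rewrite -[X in X <= _]mulr1; apply: ler_wpM2l.
  by rewrite /Defs.sub_series c0 d0 subrr.
have hnorm n : (linf_norm absK N (Defs.sub_series (shpow c n) (shpow d n))
       <= (eps * ((2 : R)^-1) ^+ n)%:E)%E.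
  apply: linf_ub => // w.
  apply: le_trans (domb_diff abs0 abs_ge0 absD absM abs1 n hc' hd' hcd' w) _.
  set k := size w.
  apply: (@le_trans _ _ (eps * n%:R * ((5 * A) ^+ k / 4%:R ^+ n) * k`!%:R)).
    apply: ler_wpM2r => //; apply: ler_wpM2l; first by rewrite mulr_ge0.
    exact: Hs_bound.
  have h5 : (5 * A) ^+ k <= N%:R ^+ k.
    by rewrite lerXn2r // nnegrE // mulr_ge0.
  have h2 : (n%:R : R) <= 2 ^+ n.
    by rewrite -natrX ler_nat ltnW // ltn_expl.
  apply: (@le_trans _ _ (eps * 2 ^+ n * (N%:R ^+ k / 4%:R ^+ n) * k`!%:R)).
    apply: ler_wpM2r => //; apply: ler_pM.
    - by rewrite mulr_ge0.
    - by rewrite divr_ge0 // exprn_ge0 // mulr_ge0.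
    - by apply: ler_wpM2l.
    - by apply: ler_wpM2r => //; rewrite invr_ge0 exprn_ge0.
  rewrite /den natrX le_eqVlt; apply/orP; left; apply/eqP.
  have e4 : (4 : R) ^+ n = 2 ^+ n * 2 ^+ n by rewrite -exprMn -natrM.
  rewrite e4 exprVn.
  have t0 : (2 : R) ^+ n != 0 by rewrite expf_neq0 // pnatr_eq0.
  move: t0; set t := (2 : R) ^+ n; move=> t0.
  by field.
apply: lime_le.
  by apply: is_cvg_ereal_nneg_natsum => n _; exact: linf_ge0.
apply: nearW => n0.
apply: le_trans; first by apply: lee_sum => n _; exact: hnorm.
rewrite sumEFin lee_fin -mulr_sumr.
by apply: ler_piMr => //; exact: half_sum.
Qed.

Theorem gen_main : lemma3p5_stmt absK m.
Proof.
move=> M c cj M0 pc hcfin hcj hcv.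
set A0 := linf_norm absK M c.
have A0ge : (0 <= A0)%E := linf_ge0 M c.
have A0fin : A0 \is a fin_num by rewrite ge0_fin_numE.
set a := fine A0.
have a0 : 0 <= a by apply: fine_ge0.
have hc w : absK (c w) <= a * den M w.
  by apply: linf_pt => //; rewrite /a fineK.
have [Ffin Fcv] := (fine_cvgP _ _).1 hcv.
have Flt := cvgr_dist_lt _ _ Fcv 1 (@ltr01 R).
exists (Num.truncn (5 * ((a + 1) * M%:R))).+1 => N hN.
have hN' : 5 * ((a + 1) * M%:R) <= N%:R.
  apply/ltW/(lt_le_trans (truncnS_gt _)); by rewrite ler_nat.
apply: (@squeeze_cvge _ _ _ _ (fun _ => 0%E) _
   (fun j => linf_norm absK M (Defs.sub_series c (cj j)))); last 2 first.
- exact: cvg_cst.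
- exact: hcv.
near=> j.
have hj1 : (0 < j)%N by near: j; exact: nbhs_infty_gt.
have efin : linf_norm absK M (Defs.sub_series c (cj j)) \is a fin_num by near: j; exact: Ffin.
have elt : `|0 - fine (linf_norm absK M (Defs.sub_series c (cj j)))| < 1 by near: j; exact: Flt.
apply/andP; split.
  by apply: nneseries_ge0 => n _ _; exact: linf_ge0.
rewrite -(fineK efin).
apply: (key (M:=M) (N:=N) (c:=c) (d:=cj j) (a:=a)
   (eps:=fine (linf_norm absK M (Defs.sub_series c (cj j))))) => //.
- exact: (hcj j hj1).1.
- apply/andP; split; first by apply: fine_ge0; exact: linf_ge0.
  by move: elt; rewrite sub0r normrN => /ltW; apply: le_trans; exact: ler_norm.
  by move=> w; apply: (linf_pt (c := Defs.sub_series c (cj j))) => //; rewrite fineK.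
Unshelve. all: end_near.
Qed.

End Main.

Local Open Scope ring_scope.

Theorem lemma3p5 (R : realType) (m : nat) :
  lemma3p5_stmt (R := R) (K := R) (fun x : R => `|x|) m /\
  lemma3p5_stmt (R := R) (K := complex.complex R) (@complex.ComplexField.Normc.normc R) m.
Proof.
split; apply: gen_main.
- exact: normr0.
- by move=> x; exact: normr_ge0.
- by move=> x y; exact: ler_normD.
- by move=> x y; exact: normrM.
- by move=> x; exact: normrN.
- by rewrite normr1.
- exact: complex.ComplexField.Normc.normc0.
- by move=> [a b]; rewrite /complex.ComplexField.Normc.normc sqrtr_ge0.
- by move=> x y; exact: (@complex.le_normcD R x y).
- by move=> x y; exact: complex.ComplexField.Normc.normcM.
- by move=> x; exact: (@complex.normcN R x).
- by rewrite complex.ComplexField.Normc.normc1.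
Qed.
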